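(* For every integer $n\geq 3$, $$\gamma_t(C_n\times C_3)=\left\lceil \frac{4n}{5}\right\rceil$$ and $$\gamma_p(C_n\times C_3)=\begin{cases}\left\lceil\frac{4n}{5}\right\rceil, & \text{if } n\equiv 0,2,4 \pmod 5,\\[2pt] \left\lceil\frac{4n}{5}\right\rceil+1, & \text{if } n\equiv 1,3 \pmod 5.\end{cases}$$
   Context: All graphs are finite, simple and undirected. $C_n$ denotes the cycle of order $n$ and $G\times H$ the Cartesian product of graphs. For a graph $G$ without isolated vertices: a set $D\subseteq V(G)$ is a total dominating set if every vertex of $G$ (including those in $D$) has a neighbour in $D$; $\gamma_t(G)$ is the minimum size of a total dominating set. A set $D\subseteq V(G)$ is a paired dominating set if every vertex outside $D$ has a neighbour in $D$ and the induced subgraph $G[D]$ has a perfect matching; $\gamma_p(G)$ is the minimum size of a paired dominating set. *)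

(* Defs.v *)
From mathcomp Require Import all_boot.
Set Implicit Arguments. Unset Strict Implicit. Unset Printing Implicit Defensive.

Definition cycle_adj (n : nat) : rel 'I_n :=
  fun i j => (j == (i.+1 %% n) :> nat) || (i == (j.+1 %% n) :> nat).

Definition cart_adj (T U : finType) (e : rel T) (f : rel U) : rel (T * U) :=
  fun x y => ((x.1 == y.1) && f x.2 y.2) || ((x.2 == y.2) && e x.1 y.1).

Definition total_dominating (T : finType) (e : rel T) (D : {set T}) : Prop :=
  forall v : T, exists2 u, u \in D & e v u.

Definition dominating (T : finType) (e : rel T) (D : {set T}) : Prop :=
  forall v : T, v \notin D -> exists2 u, u \in D & e v u.

Definition has_perfect_matching (T : finType) (e : rel T) (D : {set T}) : Prop :=
  exists m : T -> T, forall x, x \in D ->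
    [/\ m x \in D, m x != x, m (m x) = x & e x (m x)].

Definition paired_dominating (T : finType) (e : rel T) (D : {set T}) : Prop :=
  dominating e D /\ has_perfect_matching e D.

Definition is_min_size (T : finType) (P : {set T} -> Prop) (k : nat) : Prop :=
  (exists2 D : {set T}, P D & #|D| = k) /\ (forall D : {set T}, P D -> k <= #|D|).

Definition gamma_t_is (T : finType) (e : rel T) (k : nat) : Prop :=
  is_min_size (total_dominating e) k.

Definition gamma_p_is (T : finType) (e : rel T) (k : nat) : Prop :=
  is_min_size (paired_dominating e) k.

Definition CnC3 (n : nat) : rel ('I_n * 'I_3) := cart_adj (@cycle_adj n) (@cycle_adj 3).

Definition ceil_div (a b : nat) : nat := (a + b.-1) %/ b.
Arguments CnC3 n : clear implicits.

(* Main.v *)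
Require Import Defs.
From mathcomp Require Import all_boot zify.
Set Implicit Arguments. Unset Strict Implicit. Unset Printing Implicit Defensive.

Lemma ord_gt0 n (i : 'I_n) : 0 < n.
Proof. exact: leq_ltn_trans (leq0n i) (ltn_ord i). Qed.

Definition osucc n (i : 'I_n) : 'I_n := Ordinal (ltn_pmod i.+1 (ord_gt0 i)).
Definition opred n (i : 'I_n) : 'I_n := Ordinal (ltn_pmod (i + n.-1) (ord_gt0 i)).

Lemma osuccK n : cancel (@osucc n) (@opred n).
Proof.
move=> i; apply: val_inj => /=; have n0 := ord_gt0 i.
by rewrite modnDml addSn -addnS prednK // modnDr modn_small.
Qed.

Lemma opredK n : cancel (@opred n) (@osucc n).
Proof.
move=> i; apply: val_inj => /=; have n0 := ord_gt0 i.
by rewrite -addn1 modnDml -addnA addn1 prednK // modnDr modn_small.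
Qed.

Lemma adj_succ n (i : 'I_n) : cycle_adj i (osucc i).
Proof. by rewrite /cycle_adj /= eqxx. Qed.

Lemma adj_pred n (i : 'I_n) : cycle_adj i (opred i).
Proof.
apply/orP; right; have /(congr1 val) /= -> := opredK i; by [].
Qed.

Lemma adj_inv n (i k : 'I_n) : cycle_adj i k -> k = osucc i \/ k = opred i.
Proof.
case/orP=> /eqP H; [left; exact: val_inj|right].
have E : osucc k = i by apply: val_inj.
by rewrite -E osuccK.
Qed.

Lemma osucc_neq n (i : 'I_n) : 2 <= n -> osucc i != i.
Proof.
move=> n2; apply/negP => /eqP /(congr1 val) /=.
have := ltn_ord i; case: (ltnP i.+1 n) => h1 h2.
  by rewrite modn_small // => /eqP; rewrite eqn_leq ltnn.
have e : i.+1 = n by apply/eqP; rewrite eqn_leq h1 h2.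
by rewrite e modnn => e0; move: e; rewrite -e0 => e'; rewrite -e' in n2.
Qed.

Lemma opred_neq n (i : 'I_n) : 2 <= n -> opred i != i.
Proof.
move=> n2; apply/negP => /eqP H.
by move: (osucc_neq (opred i) n2); rewrite opredK H eqxx.
Qed.

Lemma adj3 (j k : 'I_3) : cycle_adj j k = (j != k).
Proof. by case: j => [[|[|[|?]]] ?]; case: k => [[|[|[|?]]] ?]. Qed.

Lemma cardD n (D : {set 'I_n * 'I_3}) :
  #|D| = \sum_(i < n) #|[set j : 'I_3 | (i, j) \in D]|.
Proof.
rewrite -sum1_card.
rewrite (eq_bigr (fun i => \sum_(j | (i, j) \in D) 1)); last first.
  by move=> i _; rewrite -sum1_card; apply: eq_bigl => j; rewrite inE.
rewrite pair_big_dep /=; apply: eq_bigl => -[i j] /=; by [].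
Qed.

Definition col n (D : {set 'I_n * 'I_3}) (i : 'I_n) : {set 'I_3} := [set j | (i, j) \in D].

Lemma td_col n (D : {set 'I_n * 'I_3}) : total_dominating (CnC3 n) D ->
  forall (i : 'I_n) (j : 'I_3),
  (exists2 j', j' \in col D i & j' != j) \/ j \in col D (osucc i) \/ j \in col D (opred i).
Proof.
move=> H i j; case: (H (i, j)) => -[i' j'] uD.
rewrite /CnC3 /cart_adj /= => /orP [/andP [/eqP ei aj] | /andP [/eqP ej ai]].
- by left; exists j'; [rewrite inE ei | rewrite eq_sym -adj3].
- by right; case: (adj_inv ai) => e; [left|right]; rewrite inE -e ej.
Qed.

Lemma td_cons n (D : {set 'I_n * 'I_3}) : total_dominating (CnC3 n) D -> forall i : 'I_n,
  (#|col D i| = 0 -> 3 <= #|col D (opred i)| + #|col D (osucc i)|) /\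
  (#|col D i| = 1 -> 1 <= #|col D (opred i)| + #|col D (osucc i)|).
Proof.
move=> H i; split.
- move/cards0_eq => c0.
  have sub : [set: 'I_3] \subset col D (opred i) :|: col D (osucc i).
    apply/subsetP => j _; rewrite inE.
    case: (td_col H i j) => [[j' ]|[->|->]]; rewrite ?orbT //.
    by rewrite c0 inE.
  have := subset_leq_card sub; rewrite cardsT card_ord => h.
  by apply: leq_trans h _; rewrite cardsU leq_subr.
- move/eqP/cards1P => [j0 c1].
  case: (td_col H i j0) => [[j' ]|[h|h]].
  + by rewrite c1 inE => /eqP ->; rewrite eqxx.
  + have : 0 < #|col D (osucc i)| by apply/card_gt0P; exists j0.
    lia.
  + have : 0 < #|col D (opred i)| by apply/card_gt0P; exists j0.
    lia.
Qed.

Lemma sum_succ n (F : 'I_n -> nat) : \sum_(i < n) F (osucc i) = \sum_(i < n) F i.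
Proof. by rewrite [RHS](reindex_inj (can_inj (@osuccK n))). Qed.
Lemma sum_pred n (F : 'I_n -> nat) : \sum_(i < n) F (opred i) = \sum_(i < n) F i.
Proof. by rewrite [RHS](reindex_inj (can_inj (@opredK n))). Qed.

Lemma cyc_bound n (d : 'I_n -> nat) :
 (forall i, (d i = 0 -> 3 <= d (opred i) + d (osucc i)) /\
            (d i = 1 -> 1 <= d (opred i) + d (osucc i))) ->
 4 * n <= 5 * \sum_(i < n) d i.
Proof.
move=> H.
pose s := @osucc n; pose p := @opred n.
have loc : forall i, 12 <= d (p (p (p i))) + 2 * d (p (p i)) + 3 * d (p i) + 3 * d i
   + 3 * d (s i) + 2 * d (s (s i)) + d (s (s (s i))).
  move=> i.
  have [a1 a2] := H (p (p i)); have [b1 b2] := H (p i); have [c1 c2] := H i.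
  have [e1 e2] := H (s i); have [f1 f2] := H (s (s i)).
  rewrite /p /s ?opredK ?osuccK in a1 a2 b1 b2 c1 c2 e1 e2 f1 f2 *.
  lia.
have : \sum_(i < n) 12 <= \sum_(i < n) (d (p (p (p i))) + 2 * d (p (p i)) + 3 * d (p i) + 3 * d i
   + 3 * d (s i) + 2 * d (s (s i)) + d (s (s (s i)))).
  by apply: leq_sum => i _; exact: loc.
rewrite sum_nat_const card_ord !big_split /= !big1_eq /p /s.
have P1 : \sum_(i < n) d (opred i) = \sum_(i < n) d i by exact: sum_pred.
have P2 : \sum_(i < n) d (opred (opred i)) = \sum_(i < n) d i.
  by rewrite -P1; exact: (sum_pred (fun x => d (opred x))).
have P3 : \sum_(i < n) d (opred (opred (opred i))) = \sum_(i < n) d i.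
  by rewrite -P2; exact: (sum_pred (fun x => d (opred (opred x)))).
have S1 : \sum_(i < n) d (osucc i) = \sum_(i < n) d i by exact: sum_succ.
have S2 : \sum_(i < n) d (osucc (osucc i)) = \sum_(i < n) d i.
  by rewrite -S1; exact: (sum_succ (fun x => d (osucc x))).
have S3 : \sum_(i < n) d (osucc (osucc (osucc i))) = \sum_(i < n) d i.
  by rewrite -S2; exact: (sum_succ (fun x => d (osucc (osucc x)))).
rewrite P1 P2 P3 S1 S2 S3.
set X := \sum_(i < n) d i.
rewrite !addn0 => h.
lia.
Qed.

Lemma pm_even (T : finType) (e : rel T) (D : {set T}) :
  has_perfect_matching e D -> exists k, #|D| = k.*2.
Proof.
case=> m Hm.
move: {2}#|D|.+1 (ltnSn #|D|) => N; elim: N D Hm => // N IH D Hm ltD.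
case: (set_0Vmem D) => [->|[x xD]]; first by exists 0; rewrite cards0.
have [mxD mxx mmx _] := Hm x xD.
pose D' := D :\ x :\ m x.
have cD : #|D| = #|D'|.+2.
  have h1 := cardsD1 x D; have h2 := cardsD1 (m x) (D :\ x).
  rewrite xD in h1; rewrite !inE mxx mxD /= in h2.
  by rewrite h1 h2.
have HD' : forall y, y \in D' -> [/\ m y \in D', m y != y, m (m y) = y & e y (m y)].
  move=> y; rewrite /D' !inE => /and3P [ymx yx yD].
  have [myD myy mmy eym] := Hm y yD.
  split => //; rewrite myD andbT; apply/andP; split.
  - by apply: contra yx => /eqP h; rewrite -mmy h mmx.
  - by apply: contra ymx => /eqP h; rewrite -mmy h.
have ltD' : #|D'| < N by move: ltD; rewrite cD; lia.
have [k hk] := IH D' HD' ltD'.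
by exists k.+1; rewrite cD hk.
Qed.

Lemma pd_td (T : finType) (e : rel T) (D : {set T}) :
  paired_dominating e D -> total_dominating e D.
Proof.
case=> dom [m Hm] v; case: (boolP (v \in D)) => vD.
  by have [? _ _ ?] := Hm v vD; exists (m v).
exact: dom.
Qed.

Lemma LBt n (D : {set 'I_n * 'I_3}) : total_dominating (CnC3 n) D ->
  ceil_div (4 * n) 5 <= #|D|.
Proof.
move=> H; have := cyc_bound (td_cons H).
have -> : #|D| = \sum_(i < n) #|col D i| := cardD D.
rewrite /ceil_div; set X := \sum_(i < n) #|col D i|.
lia.
Qed.

Definition code := (nat * nat * nat)%type.
Definition rolN (c : code) (k : nat) : nat :=
  match k with 0 => c.1.1 | 1 => c.1.2 | _ => c.2 end.
Definition inD (c : code) k := rolN c k != 0.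
Definition idx3 := [:: 0; 1; 2].
Definition tdok (a b c : code) : bool :=
  all (fun k => has (fun k' => (k' != k) && inD b k') idx3 || inD a k || inD c k) idx3.
Definition vcnt (c : code) := count (fun k => 3 <= rolN c k) idx3.
Definition mok (b c : code) : bool :=
  all (fun k => (rolN b k == 2) == (rolN c k == 1)) idx3 && ((vcnt b == 0) || (vcnt b == 2)).
Definition Dset n (g : 'I_n -> code) : {set 'I_n * 'I_3} := [set v : 'I_n * 'I_3 | inD (g v.1) v.2].

Lemma in_idx3 (j : 'I_3) : (j : nat) \in idx3.
Proof. by case: j => [[|[|[|?]]] ?]. Qed.

Lemma idx3_lt k : k \in idx3 -> k < 3.
Proof. by rewrite !inE => /or3P [] /eqP ->. Qed.

Lemma td_build n (g : 'I_n -> code) :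
  (forall i, tdok (g (opred i)) (g i) (g (osucc i))) -> total_dominating (CnC3 n) (Dset g).
Proof.
move=> H [i j]; have := H i; move/allP/(_ j (in_idx3 j)).
case/orP => [/orP [] |].
- case/hasP => k kin /andP [nk inb].
  exists (i, Ordinal (idx3_lt kin)); first by rewrite inE.
  by rewrite /CnC3 /cart_adj /= eqxx adj3 /= -val_eqE /= eq_sym nk.
- move=> ina; exists (opred i, j); first by rewrite inE.
  by rewrite /CnC3 /cart_adj /= eqxx adj_pred orbT.
- move=> inc; exists (osucc i, j); first by rewrite inE.
  by rewrite /CnC3 /cart_adj /= eqxx adj_succ orbT.
Qed.

Definition vp (c : code) (k : nat) : nat :=
  match k with
  | 0 => if 3 <= rolN c 1 then 1 else 2
  | 1 => if 3 <= rolN c 0 then 0 else 2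
  | _ => if 3 <= rolN c 0 then 0 else 1 end.

Lemma vp_lt c k : vp c k < 3.
Proof. by case: k => [|[|k]] /=; case: ifP. Qed.

Lemma vp_prop (c : code) (j : 'I_3) : (vcnt c == 0) || (vcnt c == 2) -> 3 <= rolN c j ->
  [/\ vp c j != j, 3 <= rolN c (vp c j) & vp c (vp c j) = j].
Proof.
case: c => [[a b] c]; rewrite /vcnt /=.
case: j => [[|[|[|?]]] ?] //=;
case ha: (2 < a); case hb: (2 < b); case hc: (2 < c) => //=; by rewrite ?ha ?hb ?hc.
Qed.

Definition mm n (g : 'I_n -> code) (v : 'I_n * 'I_3) : 'I_n * 'I_3 :=
  let r := rolN (g v.1) v.2 in
  if r == 1 then (opred v.1, v.2) else if r == 2 then (osucc v.1, v.2)
  else (v.1, Ordinal (vp_lt (g v.1) v.2)).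

Lemma pm_build n (g : 'I_n -> code) : 2 <= n ->
  (forall i, mok (g i) (g (osucc i))) -> has_perfect_matching (CnC3 n) (Dset g).
Proof.
move=> n2 H; exists (mm g) => -[i j]; rewrite inE /inD /= => inj.
have Hi := H i; have Hp := H (opred i); rewrite opredK in Hp.
case/andP: Hi => /allP Hi vi; case/andP: Hp => /allP Hp _.
move: (Hi j (in_idx3 j)) (Hp j (in_idx3 j)) => ei ep.
rewrite /mm /=; case: ifP => r1.
- rewrite r1 in ep; move/eqP: ep => /eqP ep.
  rewrite inE /inD /= ep /= opredK; split => //.
    by rewrite xpair_eqE (negbTE (opred_neq i n2)).
  by rewrite /CnC3 /cart_adj /= eqxx adj_pred orbT.
case: ifP => r2.
- rewrite r2 eq_sym in ei; move/eqP: ei => /eqP ei.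
  rewrite inE /inD /= ei /= osuccK; split => //.
    by rewrite xpair_eqE (negbTE (osucc_neq i n2)).
  by rewrite /CnC3 /cart_adj /= eqxx adj_succ orbT.
have r3 : 3 <= rolN (g i) j.
  by move: inj r1 r2; rewrite /=; move=> /eqP a /negbT/eqP b /negbT/eqP c; lia.
have [nv v3 vv] := vp_prop vi r3.
have h1 : (rolN (g i) (vp (g i) j) == 1) = false.
  by apply/negbTE/eqP => e; lia.
have h2 : (rolN (g i) (vp (g i) j) == 2) = false.
  by apply/negbTE/eqP => e; lia.
rewrite inE /inD /= h1 h2; split.
- by apply/eqP => e; lia.
- by rewrite xpair_eqE eqxx /= -val_eqE /= nv.
- by apply/eqP; rewrite xpair_eqE eqxx /= -val_eqE /= vv.
- by rewrite /CnC3 /cart_adj /= eqxx adj3 -val_eqE /= eq_sym nv.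
Qed.

Lemma pd_build n (g : 'I_n -> code) : 2 <= n ->
  (forall i, tdok (g (opred i)) (g i) (g (osucc i)) && mok (g i) (g (osucc i))) ->
  paired_dominating (CnC3 n) (Dset g).
Proof.
move=> n2 H; split.
  move=> v _; apply: (td_build (g := g)) => i; by case/andP: (H i).
apply: pm_build => // i; by case/andP: (H i).
Qed.

Lemma card_Dset n (g : 'I_n -> code) :
  #|Dset g| = \sum_(i < n) count (inD (g i)) idx3.
Proof.
rewrite cardD; apply: eq_bigr => i _.
rewrite -sum1_card big_mkcond /= !big_ord_recl big_ord0 !inE /=.
by case: (inD (g i) 0); case: (inD (g i) 1); case: (inD (g i) 2).
Qed.

Definition all3 (N : nat) (E : nat -> nat -> bool) (ok : nat -> nat -> nat -> bool) :=
  all (fun a => all (fun b => all (fun c => ~~ (E a b && E b c) || ok a b c)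
     (iota 0 N)) (iota 0 N)) (iota 0 N).

Lemma win n (h : 'I_n -> nat) N (E : nat -> nat -> bool) (ok : nat -> nat -> nat -> bool) :
  (forall i, h i < N) -> (forall i, E (h i) (h (osucc i))) -> all3 N E ok ->
  forall i, ok (h (opred i)) (h i) (h (osucc i)).
Proof.
move=> hN hE /allP A i.
have hin : forall k, h k \in iota 0 N by move=> k; rewrite mem_iota add0n hN.
have e1 := hE (opred i); rewrite opredK in e1.
move/allP: (A _ (hin (opred i))) => /(_ _ (hin i)) /allP /(_ _ (hin (osucc i))).
by rewrite e1 hE.
Qed.

Definition hB (q i : nat) := if i < 5 * q then i %% 5 else 5 + (i - 5 * q).
Definition EL (L a b : nat) : bool :=
  [|| (a < 4) && (b == a.+1), (a == 4) && ((b == 0) || (b == 5)),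
      (a == 4 + L) && (b == 0) | (4 < a < 4 + L) && (b == a.+1)].

Lemma hB_lt q L i : i < 5 * q + L -> hB q i < 5 + L.
Proof. rewrite /hB; case: ifP => h1 h2; lia. Qed.

Lemma hB_edge n q L (i : 'I_n) : n = 5 * q + L -> 1 <= q -> 1 <= L ->
  EL L (hB q i) (hB q (osucc i)).
Proof.
move=> hn q1 L1; have := ltn_ord i; rewrite /= /hB.
case: (ltnP i.+1 n) => h1 h2.
  rewrite (modn_small h1).
  case: ifP => a; case: ifP => b; rewrite /EL; lia.
have e : i.+1 = n by apply/eqP; rewrite eqn_leq h1 h2.
rewrite e modnn /=.
case: ifP => a; case: ifP => b; rewrite /EL; lia.
Qed.

Lemma sum_mod5 q (w : nat -> nat) :
  \sum_(0 <= i < 5 * q) w (i %% 5) = q * \sum_(k < 5) w k.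
Proof.
elim: q => [|q IH]; first by rewrite muln0 big_geq.
have -> : 5 * q.+1 = 5 * q + 5 by lia.
rewrite (big_cat_nat (leq0n _) (leq_addr 5 _)) /= IH.
rewrite -{1}[5 * q]add0n big_addn addKn.
rewrite (@eq_big_nat _ _ _ 0 5 _ w); last first.
  by move=> i hi; congr w; lia.
rewrite big_mkord.
by rewrite mulSn addnC.
Qed.

Lemma sum_block q L (w : nat -> nat) :
  \sum_(i < 5 * q + L) w (hB q i) = q * (\sum_(k < 5) w k) + \sum_(t < L) w (5 + t).
Proof.
rewrite -(big_mkord xpredT (fun i => w (hB q i))).
rewrite (big_cat_nat (leq0n (5 * q)) (leq_addr L _)) /=.
rewrite (@eq_big_nat _ _ _ 0 (5 * q) _ (fun i => w (i %% 5))); last first.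
  by move=> i /andP [_ hi]; rewrite /hB hi.
rewrite sum_mod5; congr addn.
rewrite -{1}[5 * q]add0n big_addn addKn -(big_mkord xpredT (fun t => w (5 + t))).
apply: eq_big_nat => i _; rewrite /hB; congr w.
have -> : (i + 5 * q < 5 * q) = false by apply/negbTE; lia.
by rewrite addnK addnC.
Qed.

Definition Fs (s : seq code) (k : nat) : code := nth (0, 0, 0) s k.
Definition wt (c : code) := count (inD c) idx3.
Definition okT (s : seq code) (a b c : nat) := tdok (Fs s a) (Fs s b) (Fs s c).
Definition okP (s : seq code) (a b c : nat) :=
  tdok (Fs s a) (Fs s b) (Fs s c) && mok (Fs s b) (Fs s c).

Lemma block_td q L s : 1 <= q -> 1 <= L -> all3 (5 + L) (EL L) (okT s) ->
  total_dominating (CnC3 (5 * q + L)) (Dset (fun i => Fs s (hB q i))).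
Proof.
move=> q1 L1 H; apply: td_build => i.
apply: (win (h := fun i : 'I_(5 * q + L) => hB q i) (E := EL L) (ok := okT s) _ _ H).
  by move=> k; apply: hB_lt.
by move=> k; apply: hB_edge.
Qed.

Lemma block_pd q L s : 1 <= q -> 1 <= L -> all3 (5 + L) (EL L) (okP s) ->
  paired_dominating (CnC3 (5 * q + L)) (Dset (fun i => Fs s (hB q i))).
Proof.
move=> q1 L1 H; apply: pd_build; first by lia.
move=> i.
apply: (win (h := fun i : 'I_(5 * q + L) => hB q i) (E := EL L) (ok := okP s) _ _ H).
  by move=> k; apply: hB_lt.
by move=> k; apply: hB_edge.
Qed.

Lemma block_card q L s :
  #|Dset (fun i : 'I_(5 * q + L) => Fs s (hB q i))| =
  q * (\sum_(k < 5) wt (Fs s k)) + \sum_(t < L) wt (Fs s (5 + t)).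
Proof. by rewrite card_Dset (sum_block q L (fun k => wt (Fs s k))). Qed.

Definition cE (n a b : nat) : bool := b == a.+1 %% n.

Lemma small_td n s : 2 <= n -> all3 n (cE n) (okT s) ->
  total_dominating (CnC3 n) (Dset (fun i : 'I_n => Fs s i)).
Proof.
move=> n2 H; apply: td_build => i.
apply: (win (h := fun i : 'I_n => val i) (E := cE n) (ok := okT s) _ _ H).
  by move=> k; apply: ltn_ord.
by move=> k; rewrite /cE /= eqxx.
Qed.

Lemma small_pd n s : 2 <= n -> all3 n (cE n) (okP s) ->
  paired_dominating (CnC3 n) (Dset (fun i : 'I_n => Fs s i)).
Proof.
move=> n2 H; apply: pd_build => // i.
apply: (win (h := fun i : 'I_n => val i) (E := cE n) (ok := okP s) _ _ H).
  by move=> k; apply: ltn_ord.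
by move=> k; rewrite /cE /= eqxx.
Qed.

Definition P5 : seq code := [:: (3,3,0); (0,0,0); (0,0,2); (0,0,1); (0,0,0)].
Definition z : code := (0,0,0).
Definition c3 : code := (0,0,3).
Definition vv : code := (3,3,0).

Definition tailT (r : nat) : seq code :=
  match r with
  | 0 => P5
  | 1 => [:: vv; z; c3; c3; c3; z]
  | 2 => [:: vv; z; c3; c3; c3; c3; z]
  | 3 => [:: vv; z; c3; c3; c3; c3; c3; z]
  | _ => P5 ++ [:: vv; z; c3; c3]
  end.
Definition tailP (r : nat) : seq code :=
  match r with
  | 0 => P5
  | 1 => P5 ++ [:: vv]
  | 2 => [:: vv; z; (0,0,2); (0,0,1); (0,0,2); (0,0,1); z]
  | 3 => P5 ++ [:: vv; z; (0,3,3)]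
  | _ => P5 ++ [:: vv; z; (0,0,2); (0,0,1)]
  end.

Lemma chkT r : r < 5 -> all3 (5 + (5 + r)) (EL (5 + r)) (okT (P5 ++ tailT r)).
Proof. by case: r => [|[|[|[|[|]]]]] //= _; vm_compute. Qed.
Lemma chkP r : r < 5 -> all3 (5 + (5 + r)) (EL (5 + r)) (okP (P5 ++ tailP r)).
Proof. by case: r => [|[|[|[|[|]]]]] //= _; vm_compute. Qed.

Definition smT (n : nat) : seq code :=
  match n with
  | 3 => [:: z; z; (3,3,3)]
  | 4 => [:: z; c3; c3; vv]
  | 5 => [:: z; c3; c3; z; vv]
  | 6 => [:: z; c3; c3; c3; z; vv]
  | 7 => [:: z; c3; c3; c3; c3; z; vv]
  | 8 => [:: z; c3; c3; c3; c3; c3; z; vv]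
  | _ => P5 ++ [:: vv; z; c3; c3]
  end.
Definition smP (n : nat) : seq code :=
  match n with
  | 3 => [:: z; (0,0,2); (3,3,1)]
  | 4 => [:: z; (0,0,2); (0,0,1); vv]
  | 5 => [:: z; (0,0,2); (0,0,1); z; vv]
  | 6 => [:: z; (0,0,2); (0,0,1); z; (2,2,0); (1,1,0)]
  | 7 => [:: z; (0,0,2); (0,0,1); (0,0,2); (0,0,1); z; vv]
  | 8 => [:: z; (0,0,2); (0,0,1); z; vv; z; (0,0,2); (3,3,1)]
  | _ => P5 ++ [:: vv; z; (0,0,2); (0,0,1)]
  end.

Definition tp (n : nat) :=
  if (n %% 5 == 1) || (n %% 5 == 3) then (ceil_div (4 * n) 5).+1 else ceil_div (4 * n) 5.

Lemma small_card n s : #|Dset (fun i : 'I_n => Fs s i)| = \sum_(i < n) wt (Fs s i).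
Proof. exact: card_Dset. Qed.

Lemma small_t_ok n : 2 <= n -> all3 n (cE n) (okT (smT n)) ->
  \sum_(i < n) wt (Fs (smT n) i) = ceil_div (4 * n) 5 ->
  exists2 D, total_dominating (CnC3 n) D & #|D| = ceil_div (4 * n) 5.
Proof.
move=> n2 H e; exists (Dset (fun i : 'I_n => Fs (smT n) i)); first exact: small_td.
by rewrite small_card.
Qed.

Lemma small_p_ok n : 2 <= n -> all3 n (cE n) (okP (smP n)) ->
  \sum_(i < n) wt (Fs (smP n) i) = tp n ->
  exists2 D, paired_dominating (CnC3 n) D & #|D| = tp n.
Proof.
move=> n2 H e; exists (Dset (fun i : 'I_n => Fs (smP n) i)); first exact: small_pd.
by rewrite small_card.
Qed.

Lemma constr_t n : 3 <= n -> exists2 D, total_dominating (CnC3 n) D & #|D| = ceil_div (4 * n) 5.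
Proof.
move=> hn; case: (ltnP n 10) => n10.
  move: hn n10; case: n => [|[|[|[|[|[|[|[|[|[|m]]]]]]]]]] // _ _;
  (apply: small_t_ok; [done | vm_compute; reflexivity | by rewrite !big_ord_recl big_ord0]).
pose q := n %/ 5 - 1; pose r := n %% 5.
have e : n = 5 * q + (5 + r) by rewrite /q /r; lia.
have r5 : r < 5 by rewrite /r; lia.
have q1 : 1 <= q by rewrite /q; lia.
clearbody q r.
rewrite e; exists (Dset (fun i => Fs (P5 ++ tailT r) (hB q i))).
  exact: block_td q1 _ (chkT r5).
rewrite block_card /ceil_div.
move: r5; clear e; case: r => [|[|[|[|[|r]]]]] // _;
rewrite !big_ord_recl !big_ord0 /wt /vv /c3 /z /=; lia.
Qed.

Lemma constr_p n : 3 <= n -> exists2 D, paired_dominating (CnC3 n) D & #|D| = tp n.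
Proof.
move=> hn; case: (ltnP n 10) => n10.
  move: hn n10; case: n => [|[|[|[|[|[|[|[|[|[|m]]]]]]]]]] // _ _;
  (apply: small_p_ok; [done | vm_compute; reflexivity | by rewrite !big_ord_recl big_ord0]).
pose q := n %/ 5 - 1; pose r := n %% 5.
have e : n = 5 * q + (5 + r) by rewrite /q /r; lia.
have r5 : r < 5 by rewrite /r; lia.
have q1 : 1 <= q by rewrite /q; lia.
clearbody q r.
rewrite e; exists (Dset (fun i => Fs (P5 ++ tailP r) (hB q i))).
  exact: block_pd q1 _ (chkP r5).
rewrite block_card /tp /ceil_div.
move: r5; clear e; case: r => [|[|[|[|[|r]]]]] // _;
rewrite !big_ord_recl !big_ord0 /wt /vv /c3 /z /=; case: ifP => h; lia.
Qed.

Theorem theorem3p1 (n : nat) (hn : 3 <= n) :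
  gamma_t_is (CnC3 n) (ceil_div (4 * n) 5)
  /\ gamma_p_is (CnC3 n)
       (if (n %% 5 == 1) || (n %% 5 == 3) then (ceil_div (4 * n) 5).+1
        else ceil_div (4 * n) 5).
Proof.
split.
  split; [exact: constr_t | exact: LBt].
split; first exact: constr_p.
move=> D pD.
have h1 := LBt (pd_td pD).
have [k hk] := pm_even (proj2 pD).
rewrite hk -mul2n in h1 *; rewrite /ceil_div in h1 *.
case: ifP => h; lia.
Qed.
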